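(* There exists an integer $a_0$ such that for every integer $a\ge a_0$ and every positive integer $k\le\log a$ (natural logarithm), with positive probability the random graph $G_{a,k}$ satisfies both: (i) $G_{a,k}$ has a fractional $2$-guidance system with maximum outdegree at most $3$, and (ii) $G_{a,k}$ does not have a weak $2$-guidance system with maximum outdegree at most $k$.
   Context: For positive integers $a,k$, let $m=k2^{k+1}$. The random graph $G_{a,k}$ is obtained as follows: take disjoint sets $L$ of size $a$ and $R$ of size $ma$, and join each vertex of $L$ to each vertex of $R$ independently with probability $1/2$ (no other edges among $L\cup R$); partition $R$ arbitrarily into $m$ parts $R_1,\dots,R_m$ of size $a$, and for each $i$ add a new vertex $x_i$ adjacent exactly to all vertices of $R_i$. A partial orientation of $G$ is a directed graph $\vec{H}$ on $V(G)$ such that every $(u,v)\in E(\vec{H})$ satisfies $uv\in E(G)$. $B_{\vec{H}}(v,a)$ is the set of vertices reachable from $v$ by a directed path of length at most $a$. A weak $r$-guidance system of $G$ is a partial orientation $\vec{H}$ such that for any distinct $u,v$ at distance $\ell\le r$ in $G$ there exist non-negative integers $a,b$ with $a+b=\ell-1$ such that $G$ has an edge between $B_{\vec{H}}(u,a)$ and $B_{\vec{H}}(v,b)$. For $u,v$ at distance $\ell$, $\Gamma_G(u,v)$ is the set of neighbors of $u$ at distance $\ell-1$ from $v$. A fractional orientation is a function $p$ assigning a non-negative real $p(u,v)$ to each ordered pair of adjacent vertices; its maximum outdegree is $\max_u\sum_{v:uv\in E(G)}p(u,v)$. A fractional $r$-guidance system is a fractional orientation $p$ such that for all $u,v$ at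 distance $\ell$ with $2\le\ell\le r$, $\sum_{y\in\Gamma_G(u,v)}p(u,y)+\sum_{y\in\Gamma_G(v,u)}p(v,y)\ge1$. *)

(* Defs.v *)
From HB Require Import structures.
From mathcomp Require Import all_boot all_order all_algebra.
From mathcomp Require Import boolp reals exp.
Set Implicit Arguments. Unset Strict Implicit. Unset Printing Implicit Defensive.
Import Order.TTheory GRing.Theory Num.Theory.
Local Open Scope ring_scope.

Section Graphs.
Variable V : finType.

Definition walkb (e : rel V) (u v : V) (l : nat) : bool :=
  [exists p : l.-tuple V, path e u p && (last u p == v)].

Definition gdistb (e : rel V) (u v : V) (l : nat) : bool :=
  walkb e u v l && [forall l' : 'I_l, ~~ walkb e u v l'].

Definition partial_orientation (e H : rel V) : Prop :=
  forall u v, H u v -> e u v.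

Definition ballH (H : rel V) (v : V) (a : nat) (x : V) : Prop :=
  exists l, (l <= a)%N /\ walkb H v x l.

Definition max_outdeg_le (H : rel V) (k : nat) : Prop :=
  forall u, (#|[set v | H u v]| <= k)%N.

Definition weak_guidance (e H : rel V) (r : nat) : Prop :=
  partial_orientation e H /\
  forall u v l, u != v -> gdistb e u v l -> (l <= r)%N ->
    exists a b : nat, (a + b = l.-1)%N /\
      exists x y, [/\ ballH H u a x, ballH H v b y & e x y].

Definition Gamma (e : rel V) (u v : V) (l : nat) : {set V} :=
  [set y | e u y & gdistb e y v l.-1].

Variable R : realType.

Definition frac_max_outdeg_le (e : rel V) (p : V -> V -> R) (k : R) : Prop :=
  forall u, \sum_(v | e u v) p u v <= k.

Definition fractional_guidance (e : rel V) (p : V -> V -> R) (r : nat) : Prop :=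
  (forall u v, e u v -> 0 <= p u v) /\
  forall u v l, gdistb e u v l -> (2 <= l <= r)%N ->
    1 <= \sum_(y in Gamma e u v l) p u y + \sum_(y in Gamma e v u l) p v y.

End Graphs.

Definition mk (k : nat) : nat := (k * 2 ^ k.+1)%N.

(* vertices: L = 'I_a, R = 'I_m * 'I_a (R_i = {i} x 'I_a), x_i for i : 'I_m *)
Definition Vt (a k : nat) : finType := (('I_a + ('I_(mk k) * 'I_a)) + 'I_(mk k))%type.

(* an outcome: the set of L-R pairs that are joined *)
Definition Outcome (a k : nat) : finType := {set 'I_a * ('I_(mk k) * 'I_a)}.

Definition Gadj (a k : nat) (E : Outcome a k) : rel (Vt a k) :=
  fun x y =>
    match x, y with
    | inl (inl l), inl (inr r) => (l, r) \in E
    | inl (inr r), inl (inl l) => (l, r) \in E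
    | inl (inr r), inr i => r.1 == i
    | inr i, inl (inr r) => r.1 == i
    | _, _ => false
    end.

(* probability of an event under the uniform distribution on outcomes,
   i.e. each L-R pair independently present with probability 1/2 *)
Definition probG (R : realType) (a k : nat) (P : Outcome a k -> Prop) : R :=
  (#|[set E : Outcome a k | `[< P E >]]|%:R) / (#|[set: Outcome a k]|%:R).

(* Main.v *)
Require Import Defs.
From HB Require Import structures.
From mathcomp Require Import all_boot all_order all_algebra.
From mathcomp Require Import boolp reals exp sequences.
From mathcomp Require Import ring lra.
Import Order.TTheory GRing.Theory Num.Theory.
Set Implicit Arguments. Unset Strict Implicit. Unset Printing Implicit Defensive.

Section Walks.
Variable V : finType.
Variable e : rel V.

Lemma walk0 u v : walkb e u v 0 = (u == v).
Proof.
apply/existsP/eqP => [[p /andP[_ /eqP <-]]|->]; first by rewrite (tuple0 p).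
by exists [tuple]; rewrite /= eqxx.
Qed.

Lemma walk1 u v : walkb e u v 1 = e u v.
Proof.
apply/existsP/idP => [[p]|h].
  case/tupleP: p => x p; rewrite (tuple0 p) /= andbT => /andP[h /eqP <-] //.
by exists [tuple v]; rewrite /= h eqxx.
Qed.

Lemma walk2 u v : walkb e u v 2 -> exists w, e u w && e w v.
Proof.
case/existsP => p; case/tupleP: p => x p; case/tupleP: p => y p.
rewrite (tuple0 p) /= andbT => /andP[/andP[h1 h2] /eqP hy].
by exists x; rewrite h1 -hy h2.
Qed.

Lemma walk2I u w v : e u w -> e w v -> walkb e u v 2.
Proof. by move=> h1 h2; apply/existsP; exists [tuple w; v]; rewrite /= h1 h2 eqxx. Qed.

Lemma gdist1 y v : gdistb e y v 1 = e y v && (y != v).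
Proof.
rewrite /gdistb walk1; congr (_ && _).
apply/forallP/idP => [/(_ ord0)|h i]; first by rewrite walk0.
by case: i => [[|//] ?]; rewrite walk0.
Qed.

Lemma gdist2P u v : gdistb e u v 2 ->
  [/\ u != v, ~~ e u v & exists w, e u w && e w v].
Proof.
case/andP => /walk2 hw /forallP h.
have := h ord0; have := h (@Ordinal 2 1 isT).
by rewrite walk0 walk1 /= => h1 h0; split.
Qed.

Lemma gdist2I u w v : u != v -> ~~ e u v -> e u w -> e w v -> gdistb e u v 2.
Proof.
move=> h0 h1 hw1 hw2; rewrite /gdistb (walk2I hw1 hw2) /=.
by apply/forallP => -[[|[|//]] ?]; rewrite ?walk0 ?walk1.
Qed.

End Walks.

Lemma ballH0 (V : finType) (H : rel V) x y : ballH H x 0 y -> y = x.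
Proof. by case=> l [l0 hw]; move: l0 hw; rewrite leqn0 => /eqP ->; rewrite walk0 => /eqP. Qed.

Lemma ballH1 (V : finType) (H : rel V) x y : ballH H x 1 y -> y = x \/ H x y.
Proof.
case=> [[|[|l]]] [hl hw] //.
  by left; move: hw; rewrite walk0 => /eqP.
by right; move: hw; rewrite walk1.
Qed.

Section Sums.
Variable R : realType.
Local Open Scope ring_scope.

Lemma sum_le_card (T : finType) (P : pred T) (f : T -> R) (c : R) (A : {set T}) :
  0 <= c -> (forall y, P y -> f y <= (if y \in A then c else 0)) ->
  \sum_(y | P y) f y <= c * #|A|%:R.
Proof.
move=> c0 hf; apply: (le_trans (ler_sum _ hf)).
apply: (@le_trans _ _ (\sum_y (if y \in A then c else 0))).
  rewrite [X in X <= _]big_mkcond; apply: ler_sum => y _.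
  by case: (P y); case: (y \in A).
by rewrite -big_mkcond sumr_const mulr_natr.
Qed.

Lemma sum_ge_card (T : finType) (A B : {set T}) (f : T -> R) (c : R) :
  B \subset A -> (forall y, y \in A -> 0 <= f y) -> (forall y, y \in B -> c <= f y) ->
  c * #|B|%:R <= \sum_(y in A) f y.
Proof.
move=> /subsetP sBA f0 hc.
have -> : c * #|B|%:R = \sum_(y in B) c by rewrite sumr_const mulr_natr.
apply: (@le_trans _ _ (\sum_(y in B) f y)); first by apply: ler_sum => y; apply: hc.
rewrite [X in X <= _]big_mkcond [X in _ <= X]big_mkcond; apply: ler_sum => y _.
case: ifP => yB; first by rewrite sBA.
by case: ifP => // /f0.
Qed.
Lemma ar_le (x : R) (D s : nat) : 0 <= x -> (0 < D)%N -> (s <= D)%N -> x / D%:R * s%:R <= x.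
Proof.
move=> x0 D0 sD.
have D0' : (0 : R) < D%:R by rewrite ltr0n.
rewrite mulrAC ler_pdivrMr // ler_wpM2l // ler_nat //.
Qed.
Lemma ar_ge (D s q : nat) : (0 < D)%N -> (0 < q)%N -> (D <= q * s)%N -> 2 / q%:R <= (2 / D%:R * s%:R : R).
Proof.
move=> D0 q0 h.
have D0' : (0 : R) < D%:R by rewrite ltr0n.
have q0' : (0 : R) < q%:R by rewrite ltr0n.
have -> : 2 / D%:R * s%:R = (2 * (q * s)%:R) / D%:R / q%:R :> R.
  by rewrite natrM; field; rewrite !lt0r_neq0.
rewrite ler_pM2r ?invr_gt0 // ler_pdivlMr // ler_wpM2l // ler_nat.
done.
Qed.

End Sums.
Section Vectors.
Variable n : nat.
Definition Vec := {ffun 'I_n -> bool}.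
Definition dot (u v : Vec) : bool := \big[addb/false]_(j < n) (u j && v j).
Definition vadd (u v : Vec) : Vec := [ffun j => u j (+) v j].
Definition ev (j : 'I_n) : Vec := [ffun i => i == j].
Definition vz : Vec := [ffun _ => false].

Lemma card_Vec : #|{: Vec}| = 2 ^ n.
Proof. by rewrite card_ffun card_bool card_ord. Qed.

Lemma dotC u v : dot u v = dot v u.
Proof. by apply: eq_bigr => j _; rewrite andbC. Qed.

Lemma dotDr u v w : dot u (vadd v w) = dot u v (+) dot u w.
Proof.
rewrite /dot -big_split /=; apply: eq_bigr => j _; rewrite ffunE.
by case: (u j) (v j) (w j) => [] [] [].
Qed.

Lemma dotDl u v w : dot (vadd u v) w = dot u w (+) dot v w.
Proof. by rewrite dotC dotDr !(dotC w). Qed.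

Lemma dot_ev u j : dot u (ev j) = u j.
Proof.
rewrite /dot (bigD1 j) //= big1 => [|i /negbTE hi]; rewrite ffunE ?eqxx ?andbT ?addbF //.
by rewrite hi andbF.
Qed.

Lemma dot_vz v : dot vz v = false.
Proof. by rewrite /dot big1 // => j _; rewrite ffunE. Qed.

Lemma nz_coord u : u != vz -> exists j, u j.
Proof.
move=> hu; apply/existsP; apply: contraR hu => /existsPn h.
by apply/eqP/ffunP => j; rewrite ffunE; apply/negbTE.
Qed.

Lemma vaddK t : involutive (vadd ^~ t).
Proof. by move=> v; apply/ffunP => j; rewrite !ffunE addbK. Qed.

Lemma card_shift t (P Q : pred Vec) :
  (forall v, P (vadd v t) = Q v) -> #|[set v | P v]| = #|[set v | Q v]|.
Proof.
move=> h; rewrite -(card_preimset _ (inv_inj (vaddK t))).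
by apply: eq_card => v; rewrite !inE h.
Qed.

Lemma card_split (P Q : pred Vec) :
  #|[set v | P v && Q v]| + #|[set v | ~~ P v && Q v]| = #|[set v | Q v]|.
Proof.
rewrite -(cardsID [set v | P v] [set v | Q v]); congr (_ + _); apply: eq_card => v;
by rewrite !inE andbC.
Qed.

Lemma card_half u : u != vz -> (2 * #|[set v | dot u v]| = 2 ^ n)%N.
Proof.
case/nz_coord => j hj.
have h1 : #|[set v | dot u v]| = #|[set v | ~~ dot u v]|.
  by apply: (card_shift (t := ev j)) => v; rewrite dotDr dot_ev hj addbT.
have := card_split (dot u) predT.
have -> : [set v | dot u v && predT v] = [set v | dot u v] by apply/setP => v; rewrite !inE andbT.
have -> : [set v | ~~ dot u v && predT v] = [set v | ~~ dot u v] by apply/setP => v; rewrite !inE andbT.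
have -> : [set v | predT v] = [set: Vec] by apply/setP => v; rewrite !inE.
rewrite cardsT card_Vec => <-; rewrite -h1.
by rewrite addnn mul2n.
Qed.

Lemma card_quarter u1 u2 : u1 != vz -> u2 != vz ->
  (2 ^ n <= 4 * #|[set v | dot u1 v && dot u2 v]|)%N.
Proof.
move=> h1 h2; have [<-|ne] := eqVneq u1 u2.
  have := card_half h1.
  have -> : [set v | dot u1 v && dot u1 v] = [set v | dot u1 v] by apply/setP => v; rewrite !inE andbb.
  by move=> <-; rewrite leq_mul2r orbT.
have : vadd u1 u2 != vz.
  apply: contra ne => /eqP h; apply/eqP/ffunP => j.
  by move/ffunP: h => /(_ j); rewrite !ffunE; case: (u1 j) (u2 j) => [] [].
case/nz_coord => j; rewrite ffunE => hj.
case hu1 : (u1 j); move: hj; rewrite hu1 => hj.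
- rewrite /= in hj; move/negbTE: hj => hu2.
  have hs : #|[set v | dot u1 v && dot u2 v]| = #|[set v | ~~ dot u1 v && dot u2 v]|.
    by apply: (card_shift (t := ev j)) => v; rewrite !dotDr !dot_ev hu1 hu2 addbT addbF.
  have := card_split (dot u1) (dot u2); rewrite -hs addnn => hh.
  by rewrite -(card_half h2) -hh -mul2n mulnA.
- rewrite /= in hj.
  have hs : #|[set v | dot u2 v && dot u1 v]| = #|[set v | ~~ dot u2 v && dot u1 v]|.
    by apply: (card_shift (t := ev j)) => v; rewrite !dotDr !dot_ev hu1 hj addbT addbF.
  have := card_split (dot u2) (dot u1); rewrite -hs addnn => hh.
  have -> : [set v | dot u1 v && dot u2 v] = [set v | dot u2 v && dot u1 v] by apply/setP => v; rewrite !inE andbC.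
  by rewrite -(card_half h1) -hh -mul2n mulnA.
Qed.

Lemma card_kernel (s : seq Vec) :
  (2 ^ n <= 2 ^ size s * #|[set u | all (fun v => ~~ dot u v) s]|)%N.
Proof.
elim: s => [|v s IH] /=.
  rewrite mul1n; have -> : [set u : Vec | true] = setT by apply/setP => u; rewrite !inE.
  by rewrite cardsT card_Vec.
apply: (leq_trans IH); rewrite expnSr -mulnA leq_pmul2l ?expn_gt0 //.
case: (pickP (fun t => all (fun v => ~~ dot t v) s && dot t v)) => [t /andP[ht htv]|hn].
  have hs : #|[set u | ~~ dot u v && all (fun v => ~~ dot u v) s]| =
            #|[set u | dot u v && all (fun v => ~~ dot u v) s]|.
    apply: (card_shift (t := t)) => u; rewrite dotDl htv addbT negbK; congr (_ && _).
    apply: eq_in_all => w ws; rewrite dotDl.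
    by move/allP: ht => /(_ w ws) /negbTE ->; rewrite addbF.
  have := card_split (fun u => dot u v) (fun u => all (fun v => ~~ dot u v) s).
  by rewrite /= -hs addnn mul2n => <-.
rewrite -[X in (X <= _)%N]mul1n leq_mul //; apply: subset_leq_card; apply/subsetP => u.
rewrite !inE => hu; rewrite hu andbT; apply/negP => huv.
by have := hn u; rewrite /= hu huv.
Qed.
End Vectors.
Arguments vz {n}.
Section Construction.
Variables (a k : nat).
Hypothesis Hak : (2 ^ k.+1 <= a)%N.

Local Notation n := k.+1.
Local Notation VV := (Vec n).
Local Notation m := (mk k).

Lemma hV : (#|{: VV}| <= a)%N.
Proof. by rewrite card_Vec. Qed.

Definition emb (v : VV) : 'I_a := widen_ord hV (enum_rank v).

Lemma emb_inj : injective emb.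
Proof. by move=> u v /(congr1 val) /= /val_inj /enum_rank_inj. Qed.

Definition dec (l : 'I_a) : option VV := [pick v | emb v == l].

Lemma decK v : dec (emb v) = Some v.
Proof.
rewrite /dec; case: pickP => [w /eqP /emb_inj -> //|/(_ v)].
by rewrite eqxx.
Qed.

Lemma decE l v : dec l = Some v -> l = emb v.
Proof. by rewrite /dec; case: pickP => // w /eqP <- [<-]. Qed.

Definition edgeb (l r : 'I_a) : bool :=
  if dec l is Some u then (if dec r is Some v then dot u v else false) else false.

Lemma edge_emb u v : edgeb (emb u) (emb v) = dot u v.
Proof. by rewrite /edgeb !decK. Qed.

Lemma edgeP l r : edgeb l r -> exists u v, [/\ l = emb u, r = emb v & dot u v].
Proof.
rewrite /edgeb; case hl: (dec l) => [u|//]; case hr: (dec r) => [v|//] h.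
by exists u, v; rewrite (decE hl) (decE hr).
Qed.

Definition Eset : Outcome a k := [set p | edgeb p.1 p.2.2].

Local Notation G := (Gadj Eset).
Local Notation LV l := (inl (inl l) : Vt a k).
Local Notation RV i r := (inl (inr (i, r)) : Vt a k).
Local Notation XV i := (inr i : Vt a k).

Lemma G_LR l i r : G (LV l) (RV i r) = edgeb l r.
Proof. by rewrite /Gadj inE. Qed.

Lemma G_RL l i r : G (RV i r) (LV l) = edgeb l r.
Proof. by rewrite /Gadj inE. Qed.

Lemma G_RX i r j : G (RV i r) (XV j) = (i == j).
Proof. by []. Qed.

Lemma G_XR i r j : G (XV j) (RV i r) = (i == j).
Proof. by []. Qed.

Lemma G_sym x y : G x y = G y x.
Proof. by case: x => [[l|[i r]]|i]; case: y => [[l'|[i' r']]|i']. Qed.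

Lemma G_irr x : G x x = false.
Proof. by case: x => [[l|[i r]]|i]. Qed.

Lemma Gamma2 u v y : (y \in Gamma G u v 2) = G u y && G y v.
Proof.
have hv : G y v -> y != v by move=> h; apply/eqP => hy; move: h; rewrite hy G_irr.
rewrite inE /= gdist1; case: (G u y); case h: (G y v) => //=; rewrite hv.
Qed.

Hypothesis Hk : (0 < k)%N.

Lemma m_gt0 : (0 < m)%N.
Proof. by rewrite /mk muln_gt0 Hk expn_gt0. Qed.

Lemma N_gt0 : (0 < 2 ^ n)%N.
Proof. by rewrite expn_gt0. Qed.

Section Frac.
Variable R : realType.
Local Open Scope ring_scope.

Definition cL : R := 2 / (m * 2 ^ n)%:R.
Definition cN : R := 2 / (2 ^ n)%:R.

Definition pf (x y : Vt a k) : R :=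
  match x with
  | inl (inl _) => cL
  | inl (inr _) => if y is inr _ then 1/2 else cN
  | inr _ => if y is inl (inr (_, r)) then (if dec r is Some _ then cN else 0) else 0
  end.

Lemma cL_ge0 : 0 <= cL. Proof. by rewrite /cL divr_ge0 ?ler0n. Qed.
Lemma cN_ge0 : 0 <= cN. Proof. by rewrite /cN divr_ge0 ?ler0n. Qed.

Lemma pf_ge0 x y : 0 <= pf x y.
Proof.
case: x => [[l|[i r]]|i] /=; first exact: cL_ge0.
  by case: y => [[l|[j r']]|j]; rewrite ?cN_ge0 ?divr_ge0.
by case: y => [[l|[j r']]|j] //; case: (dec r') => //; rewrite cN_ge0.
Qed.

Lemma card_img_le (T : finType) (f : T -> Vt a k) : (#|f @: [set: T]| <= #|{: T}|)%N.
Proof. by rewrite -cardsT leq_imset_card. Qed.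

Lemma budget x : \sum_(y | G x y) pf x y <= 3.
Proof.
case: x => [[l|[i r]]|i].
- set A := (fun p : 'I_m * VV => RV p.1 (emb p.2)) @: [set: 'I_m * VV].
  apply: (@le_trans _ _ (cL * #|A|%:R)).
    apply: sum_le_card; first exact: cL_ge0.
    move=> [[l'|[j r']]|j] //=; rewrite inE /= => /edgeP [u [v [_ -> _]]].
    by rewrite ifT //; apply/imsetP; exists (j, v).
  apply: (@le_trans _ _ 2); last by rewrite ler_nat.
  apply: ar_le => //; first by rewrite muln_gt0 m_gt0 N_gt0.
  by apply: (leq_trans (card_img_le _)); rewrite card_prod card_ord card_Vec.
- rewrite (bigD1 (XV i)) /=; last by rewrite /Gadj /= eqxx.
  set A := (fun v : VV => LV (emb v)) @: [set: VV].
  apply: (@le_trans _ _ (1/2 + cN * #|A|%:R)).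
    rewrite lerD2l; apply: sum_le_card; first exact: cN_ge0.
    move=> [[l'|[j r']]|j] //=.
      rewrite inE /= => /andP[/edgeP [u [v [-> _ _]]] _].
      by rewrite ifT //; apply/imsetP; exists u.
    by move=> /andP[/eqP -> ]; rewrite eqxx.
  apply: (@le_trans _ _ (1/2 + 2)); last by lra.
  rewrite lerD2l; apply: ar_le => //; first exact: N_gt0.
  by apply: (leq_trans (card_img_le _)); rewrite card_Vec.
- set A := (fun v : VV => RV i (emb v)) @: [set: VV].
  apply: (@le_trans _ _ (cN * #|A|%:R)).
    apply: sum_le_card; first exact: cN_ge0.
    move=> [[l'|[j r']]|j] //= /eqP ->.
    case hr: (dec r') => [v|]; last by case: ifP => _ //; apply: cN_ge0.
    by rewrite ifT //; apply/imsetP; exists v => //; rewrite (decE hr).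
  apply: (@le_trans _ _ 2); last by rewrite ler_nat.
  apply: ar_le => //; first exact: N_gt0.
  by apply: (leq_trans (card_img_le _)); rewrite card_Vec.
Qed.

Lemma LB u v c (B : {set Vt a k}) : (forall y, y \in B -> G u y && G y v) ->
  (forall y, y \in B -> c <= pf u y) -> c * #|B|%:R <= \sum_(y in Gamma G u v 2) pf u y.
Proof.
move=> hB hc; apply: sum_ge_card => //; last by move=> y _; apply: pf_ge0.
by apply/subsetP => y /hB; rewrite Gamma2.
Qed.

Lemma S_ge0 u v : 0 <= \sum_(y in Gamma G u v 2) pf u y.
Proof. by apply: sumr_ge0 => y _; apply: pf_ge0. Qed.

Lemma nzL (u v : VV) : dot u v -> u != vz.
Proof. by apply: contraTneq => ->; rewrite dot_vz. Qed.

Lemma nzR (u v : VV) : dot u v -> v != vz.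
Proof. by rewrite dotC; apply: nzL. Qed.

Lemma LX l i : (exists w, G (LV l) w && G w (XV i)) ->
  1 <= \sum_(y in Gamma G (XV i) (LV l) 2) pf (XV i) y.
Proof.
case=> [[[l'|[j r]]|j]] //= /andP[]; rewrite inE /= => /edgeP [u [v [-> _ huv]]] _.
set B := (fun v => RV i (emb v)) @: [set v | dot u v].
have hB : #|B| = #|[set v | dot u v]|.
  by apply: card_imset => v1 v2 h; apply: emb_inj; congruence.
apply: le_trans (LB (c := cN) (B := B) _ _).
- apply: (@le_trans _ _ (2 / 2%:R)); first by rewrite divff // pnatr_eq0.
  apply: ar_ge => //; first exact: N_gt0.
  by rewrite hB card_half // (nzL huv).
- move=> y /imsetP [v' hv' ->]; rewrite inE in hv'.
  by rewrite /= eqxx inE /= edge_emb.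
- by move=> y /imsetP [v' hv' ->]; rewrite /= decK.
Qed.

Lemma half_le (D s : nat) : (0 < D)%N -> (D <= 4 * s)%N -> 1/2 <= (2 / D%:R * s%:R : R).
Proof.
move=> D0 h; apply: le_trans (@ar_ge R D s 4 D0 isT h).
have -> : (4%:R : R) = 2 * 2 by rewrite -natrM.
by rewrite invfM mulrA divff // pnatr_eq0.
Qed.

Lemma RRsame i r r' :
  1 <= \sum_(y in Gamma G (RV i r) (RV i r') 2) pf (RV i r) y
     + \sum_(y in Gamma G (RV i r') (RV i r) 2) pf (RV i r') y.
Proof.
have h1 : 1 = 1/2 * #|[set XV i]|%:R + 1/2 * #|[set XV i]|%:R :> R.
  by rewrite cards1; field.
rewrite h1; apply: lerD; apply: LB => y; rewrite inE => /eqP -> //=; by rewrite eqxx.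
Qed.

Lemma frac u v : gdistb G u v 2 ->
  1 <= \sum_(y in Gamma G u v 2) pf u y + \sum_(y in Gamma G v u 2) pf v y.
Proof.
move/gdist2P => [neq _ [w /andP[h1 h2]]].
case: u neq h1 => [[l|[i r]]|i]; case: v h2 => [[l'|[i' r']]|i']; case: w => [[l0|[j r0]]|j] //=.
- move=> hl' neq hl; rewrite inE /= in hl; rewrite inE /= in hl'.
  have [u1 [v0 [-> _ d1]]] := edgeP hl; have [u2 [v0' [-> _ d2]]] := edgeP hl'.
  set B := (fun p : 'I_m * VV => RV p.1 (emb p.2)) @: setX [set: 'I_m] [set v | dot u1 v && dot u2 v].
  have hB : #|B| = (m * #|[set v | dot u1 v && dot u2 v]|)%N.
    rewrite card_imset ?cardsX ?cardsT ?card_ord //.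
    move=> [j1 w1] [j2 w2] /= h.
    have [-> e2] : j1 = j2 /\ emb w1 = emb w2 by split; congruence.
    by rewrite (emb_inj e2).
  have hq : (m * 2 ^ n <= 4 * #|B|)%N.
    by rewrite hB mulnCA leq_mul2l (card_quarter (nzL d1) (nzL d2)) orbT.
  have hD : (0 < m * 2 ^ n)%N by rewrite muln_gt0 m_gt0 N_gt0.
  apply: (@le_trans _ _ (1/2 + 1/2)); first by rewrite -splitr.
  apply: lerD.
  + apply: le_trans (LB (c := cL) (B := B) _ _); first exact: half_le.
      move=> y /imsetP [[j1 w1]]; rewrite inE /= => /andP[_]; rewrite inE => /andP[a1 a2] ->.
      by rewrite /= !inE /= !edge_emb a1 a2.
    by [].
  + apply: le_trans (LB (c := cL) (B := B) _ _); first exact: half_le.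
      move=> y /imsetP [[j1 w1]]; rewrite inE /= => /andP[_]; rewrite inE => /andP[a1 a2] ->.
      by rewrite /= !inE /= !edge_emb a1 a2.
    by [].
- move=> hj _ hl; apply: (@le_trans _ _ (0 + 1)); first by rewrite add0r.
  apply: lerD; first exact: S_ge0.
  by apply: LX; exists (RV j r0); rewrite /= hj andbT.
- move=> h' neq h; rewrite inE /= in h; rewrite inE /= in h'.
  case: (eqVneq i i') => [<-|ne]; first exact: RRsame.
  have [u0 [v1 [_ -> d1]]] := edgeP h; have [u0' [v2 [_ -> d2]]] := edgeP h'.
  set B := (fun u => LV (emb u)) @: [set u | dot v1 u && dot v2 u].
  have hB : #|B| = #|[set u | dot v1 u && dot v2 u]|.
    by apply: card_imset => x1 x2 hx; apply: emb_inj; congruence.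
  have hq : (2 ^ n <= 4 * #|B|)%N by rewrite hB (card_quarter (nzR d1) (nzR d2)).
  apply: (@le_trans _ _ (1/2 + 1/2)); first by rewrite -splitr.
  apply: lerD.
  + apply: le_trans (LB (u := RV i (emb v1)) (v := RV i' (emb v2)) (c := cN) (B := B) _ _); first exact: half_le N_gt0 hq.
      move=> y /imsetP [x1]; rewrite inE => /andP[a1 a2] ->.
      by rewrite /= !inE /= !edge_emb !(dotC x1) a1 a2.
    by move=> y /imsetP [x1 _ ->].
  + apply: le_trans (LB (u := RV i' (emb v2)) (v := RV i (emb v1)) (c := cN) (B := B) _ _); first exact: half_le N_gt0 hq.
      move=> y /imsetP [x1]; rewrite inE => /andP[a1 a2] ->.
      by rewrite /= !inE /= !edge_emb !(dotC x1) a1 a2.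
    by move=> y /imsetP [x1 _ ->].
- by move=> /eqP -> _ /eqP ->; apply: RRsame.
- move=> hl _ hj; apply: (@le_trans _ _ (1 + 0)); first by rewrite addr0.
  apply: lerD; last exact: S_ge0.
  by apply: LX; exists (RV j r0); rewrite /= hj andbT.
- by move=> /eqP <- /negP ne /eqP hj; case: ne; rewrite hj.
Qed.

End Frac.
Definition blk (y : Vt a k) : option 'I_m := if y is inl (inr (i, _)) then Some i else None.

Lemma cov_card (H : rel (Vt a k)) : partial_orientation G H -> max_outdeg_le H k ->
  (#|[set p : VV * 'I_m | [exists r : 'I_a, H (LV (emb p.1)) (RV p.2 r)]]| <= k * (2 ^ n).-1)%N.
Proof.
move=> po hdeg.
set cov := [set p : VV * 'I_m | _].
have hrow u : (#|[set i | (u, i) \in cov]| <= (u != vz) * k)%N.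
  case: eqP => [->|_].
    rewrite mul0n leqn0 cards_eq0; apply/eqP/setP => i; rewrite !inE /=.
    apply/negbTE/existsPn => r; apply/negP => /po; rewrite /Gadj inE /=.
    by case/edgeP => [u' [v [/emb_inj <- _]]]; rewrite dot_vz.
  rewrite mul1n; apply: leq_trans (hdeg (LV (emb u))).
  rewrite -(card_imset _ (@Some_inj _)); apply: leq_trans (leq_imset_card blk _).
  apply: subset_leq_card; apply/subsetP => o /imsetP [i]; rewrite !inE /= => /existsP [r hr] ->.
  by apply/imsetP; exists (RV i r); rewrite ?inE.
have -> : #|cov| = \sum_u \sum_i ((u, i) \in cov : nat).
  rewrite -sum1_card big_mkcond /= pair_big /=; apply: eq_bigr => -[u i] _.
  by case: ((u, i) \in cov).
apply: (@leq_trans (\sum_u (u != vz) * k)).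
  apply: leq_sum => u _; apply: leq_trans (hrow u).
  rewrite -sum1_card [X in (_ <= X)%N]big_mkcond /=; apply: leq_sum => i _.
  by rewrite [in X in (_ <= X)%N]inE.
rewrite -big_distrl /= mulnC leq_mul2l; apply/orP; right.
rewrite -(card_Vec n) -(cardC1 vz) -sum1_card [X in (_ <= X)%N]big_mkcond.
by apply: leq_sum => u _; rewrite inE; case: (u != vz).
Qed.

Lemma no_weak (H : rel (Vt a k)) : weak_guidance G H 2 -> max_outdeg_le H k -> False.
Proof.
move=> [po wg] hdeg.
pose Si i := [set v : VV | H (XV i) (RV i (emb v))].
have hSi i : (#|Si i| <= k)%N.
  have hinj : injective (fun v : VV => RV i (emb v)) by move=> v1 v2 h; apply: emb_inj; congruence.
  rewrite -(card_imset _ hinj); apply: leq_trans (hdeg (XV i)).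
  by apply: subset_leq_card; apply/subsetP => y /imsetP [v hv ->]; rewrite inE; rewrite inE in hv.
have hex i : exists u : VV, (u != vz) && all (fun v => ~~ dot u v) (enum (Si i)).
  have := card_kernel (enum (Si i)); rewrite -cardE.
  set K := [set u | _] => hK.
  have hK2 : (2 <= #|K|)%N.
    have : (2 ^ n <= 2 ^ k * #|K|)%N.
      by apply: (leq_trans hK); rewrite leq_mul2r leq_pexp2l ?hSi ?orbT.
    by rewrite expnS mulnC leq_pmul2l ?expn_gt0.
  have : (0 < #|K :\ vz|)%N.
    move: hK2; rewrite (cardsD1 vz K); case: (vz \in K) => /= h.
      by rewrite add1n ltnS in h.
    by rewrite add0n in h; apply: leq_trans h.
  rewrite card_gt0 => /set0Pn [u]; rewrite !inE => /andP[hu hall].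
  by exists u; rewrite hu.
pose uof i := odflt vz [pick u | (u != vz) && all (fun v => ~~ dot u v) (enum (Si i))].
have huof i : (uof i != vz) && all (fun v => ~~ dot (uof i) v) (enum (Si i)).
  rewrite /uof; case: pickP => [u hu //|hn].
  by have [u hu] := hex i; move: (hn u); rewrite hu.
set cov := [set p : VV * 'I_m | [exists r : 'I_a, H (LV (emb p.1)) (RV p.2 r)]].
have [i hi] : exists i, (uof i, i) \notin cov.
  apply/existsP; rewrite -negb_forall; apply/negP => /forallP hall.
  have : (m <= k * (2 ^ n).-1)%N.
    apply: leq_trans (cov_card po hdeg).
    have hinj : injective (fun i => (uof i, i)) by move=> i1 i2 [].
    rewrite -[X in (X <= _)%N]card_ord -cardsT -(card_imset _ hinj).
    by apply: subset_leq_card; apply/subsetP => p /imsetP [i _ ->]; apply: hall.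
  by rewrite /mk leq_pmul2l // leqNgt ltn_predL expn_gt0.
have /andP [hu hall] := huof i.
move: hu hall hi; set u := uof i => hu hall hi.
have [j hj] := nz_coord hu.
have hg : gdistb G (LV (emb u)) (XV i) 2.
  apply: (gdist2I (w := RV i (emb (ev j)))) => //=.
  by rewrite inE /= edge_emb dot_ev.
have hne : LV (emb u) != XV i by [].
have [a' [b' [hab [x [y [hx hy hxy]]]]]] := wg _ _ _ hne hg (leqnn 2).
case: a' b' hab hx hy => [|[|a']] [|[|b']] //= _ hx hy.
- move: (ballH0 hx) hxy => ->; case: (ballH1 hy) => [->|hH] //; clear hy.
  move: (po _ _ hH); case: y hH => [[l|[j' r]]|j'] //= hH /eqP ej.
  rewrite inE /= => /edgeP [u' [v [/emb_inj eu er duv]]].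
  rewrite er ej in hH; move: duv; rewrite -eu => duv.
  have : v \in enum (Si i) by rewrite mem_enum inE.
  by move/(allP hall); rewrite duv.
- move: (ballH0 hy) hxy => ->; case: (ballH1 hx) => [->|hH] //; clear hx.
  case: x hH => [[l|[j' r]]|j'] //= hH /eqP ej.
  move: hi; rewrite inE /= => /existsP; apply; exists r.
  by rewrite -ej.
Qed.

End Construction.

Local Open Scope ring_scope.
Lemma pow52 (R : realFieldType) j : (2 ^ (j + 4).+1)%:R <= ((5/2) ^+ (j + 4) : R).
Proof.
elim: j => [|j IH].
  rewrite add0n natrX !exprS expr0; lra.
rewrite addSn expnS natrM exprS.
have h0 : (0 : R) <= (2 ^ (j + 4).+1)%:R by rewrite ler0n.
by apply: le_trans (_ : 5/2 * (2 ^ (j + 4).+1)%:R <= _); [rewrite ler_wpM2r //; lra | rewrite ler_wpM2l //; lra].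
Qed.

Lemma pow_bound (R : realType) (a k : nat) : (16 <= a)%N -> (k%:R <= ln (a%:R : R)) -> (2 ^ k.+1 <= a)%N.
Proof.
move=> ha hln.
case: (leqP k 3) => hk.
  by apply: leq_trans ha; apply: (@leq_trans (2 ^ 4)) => //; rewrite leq_exp2l.
have a0 : (0 : R) < a%:R by rewrite ltr0n; apply: leq_trans ha.
have hexp : expR (k%:R : R) <= a%:R by rewrite -[X in _ <= X](lnK a0) ler_expR.
rewrite -(ler_nat R); apply: le_trans hexp.
have -> : (k%:R : R) = (8 * k)%:R * (1 / 8) by rewrite natrM; field.
rewrite expRM_natl exprM.
have -> : k = ((k - 4) + 4)%N by rewrite subnK.
apply: le_trans (pow52 _ _) _.
apply: lerXn2r; rewrite ?nnegrE; first lra.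
  rewrite exprn_ge0 // expR_ge0 //.
apply: (@le_trans _ _ ((9/8) ^+ 8)); first by rewrite !exprS expr0; lra.
apply: lerXn2r; rewrite ?nnegrE ?expR_ge0 //; first lra.
by apply: le_trans (expR_ge1Dx _); lra.
Qed.

Theorem lemma18 :
  exists a0 : nat, forall (R : realType) (a k : nat),
    (a0 <= a)%N -> (0 < k)%N -> (k%:R <= ln (a%:R : R)) ->
    0 < probG R (fun E : Outcome a k =>
          (exists p : Vt a k -> Vt a k -> R,
              fractional_guidance (Gadj E) p 2 /\ frac_max_outdeg_le (Gadj E) p 3)
          /\ ~ (exists H : rel (Vt a k),
              weak_guidance (Gadj E) H 2 /\ max_outdeg_le H k)).
Proof.
exists 16%N => R a k ha hk hln.
have Hak : (2 ^ k.+1 <= a)%N := pow_bound ha hln.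
rewrite /probG; apply: divr_gt0.
  rewrite ltr0n card_gt0; apply/set0Pn; exists (Eset Hak); rewrite inE; apply/asboolP; split.
    exists (pf Hak R); split; last by move=> u; apply: budget.
    split; first by move=> u v _; apply: pf_ge0.
    move=> u v l hg /andP[h1 h2].
    have el : l = 2%N by apply/eqP; rewrite eqn_leq h1 h2.
    by subst l; apply: frac.
  by case=> H [hw hd]; apply: (no_weak hk hw hd).
by rewrite ltr0n card_gt0; apply/set0Pn; exists set0; rewrite inE.
Qed.
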